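(* Let $\mathcal{B}=(T,\bowtie)$ be a block of homogeneous transactions, let $k$ be the chromatic number of the conflict graph $(T,\bowtie)$, and let $c_{\min}:T\to\{1,\dots,k\}$ be a proper vertex coloring of $(T,\bowtie)$ with $k$ colors. Let $T_i=\{tx\in T: c_{\min}(tx)=i\}$ and $\mathcal S_{c_{\min}}=\mathrm{LevelSchedule}(T_1,\dots,T_k)$. Then $\mathrm{Lt}_{\mathbb 1}(\mathcal S_{c_{\min}})=k$.
   Context: A block consists of a finite set $T$ of transactions with a symmetric irreflexive conflict relation $\bowtie$; the conflict graph is the undirected graph $(T,\bowtie)$. The block is homogeneous, and all transaction lengths are taken to be $1$ (length function $\mathbb 1\equiv 1$). A schedule is a set $\mathcal S\subseteq T\times T$ with $(T,\mathcal S)$ acyclic. The latency $\mathrm{Lt}_{\mathbb 1}(\mathcal S)$ is the maximum number of vertices on a directed path in $(T,\mathcal S)$. $\mathrm{LevelSchedule}(B_1,\dots,B_k)$ for an ordered partition of $T$ into conflict-free sets: set $B_0=\emptyset$, $\mathcal S=\emptyset$; for $i=1,\dots,k$ and, for each $i$, for $j=i-1,\dots,0$ (decreasing): let $E=\{(u,v)\in B_j\times B_i: u\bowtie v\}$, let $P$ be the set of pairs $(x,y)$ with a directed path from $x$ to $y$ in the current $(T,\mathcal S)$, and set $\mathcal S\leftarrow\mathcal S\cup(E\setminus P)$; output $\mathcal S$. *)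

(* Defs.v *)
From mathcomp Require Import all_boot.
Set Implicit Arguments. Unset Strict Implicit. Unset Printing Implicit Defensive.

Section Defs.
Variable T : finType.

Definition srel (S : {set T * T}) : rel T := fun a b => (a, b) \in S.

(* a directed path in (T,S), given as its sequence of vertices;
   the empty sequence is the path with 0 vertices *)
Definition dpath (S : {set T * T}) (s : seq T) : bool :=
  if s is x :: s' then path (srel S) x s' else true.

(* Lt_1(S) = n : n is the maximum number of vertices on a directed path *)
Definition latency_is (S : {set T * T}) (n : nat) : Prop :=
  (exists s, dpath S s /\ size s = n) /\ (forall s, dpath S s -> size s <= n).

Definition proper_coloring (e : rel T) (k : nat) (c : T -> 'I_k) : Prop :=
  forall x y, e x y -> c x != c y.

Definition chromatic_number (e : rel T) (k : nat) : Prop :=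
  (exists c : T -> 'I_k, proper_coloring e c) /\
  (forall m, m < k -> ~ exists c : T -> 'I_m, proper_coloring e c).

(* inner step of LevelSchedule for the pair (B_j, B_i):
   S <- S u (E \ P), P computed from the current S *)
Definition level_step (e : rel T) (Bi : {set T}) (S : {set T * T}) (Bj : {set T})
  : {set T * T} :=
  S :|: [set p | [&& p.1 \in Bj, p.2 \in Bi, e p.1 p.2 &
                     ~~ connect (srel S) p.1 p.2]].

(* prev = [B_1; ...; B_{i-1}], rest = [B_i; ...; B_k] *)
Fixpoint level_aux (e : rel T) (S : {set T * T}) (prev rest : seq {set T})
  : {set T * T} :=
  match rest with
  | [::] => S
  | Bi :: rest' =>
      (* j = i-1, ..., 1, 0 (decreasing), with B_0 = set0 *)
      level_aux e (foldl (level_step e Bi) S (rev (set0 :: prev)))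
                (rcons prev Bi) rest'
  end.

Definition LevelSchedule (e : rel T) (B : seq {set T}) : {set T * T} :=
  level_aux e set0 [::] B.

Definition color_classes (k : nat) (c : T -> 'I_k) : seq {set T} :=
  [seq [set x | c x == i] | i <- enum 'I_k].

End Defs.

(* Main.v *)
Require Import Defs.
From mathcomp Require Import all_boot.
From mathcomp Require Import zify.
From Stdlib Require Import ClassicalEpsilon.
Set Implicit Arguments. Unset Strict Implicit. Unset Printing Implicit Defensive.

Lemma connect_mono (T : finType) (S S' : {set T * T}) x y :
  S \subset S' -> connect (srel S) x y -> connect (srel S') x y.
Proof.
move=> sub; apply: connect_sub => a b ab; apply: connect1; exact: (subsetP sub).
Qed.

Lemma step_sub (T : finType) (e : rel T) (Bi : {set T}) (S : {set T * T}) Bj : S \subset @level_step T e Bi S Bj.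
Proof. exact: subsetUl. Qed.

Lemma foldl_sub (T : finType) (e : rel T) (Bi : {set T}) (S : {set T * T}) (l : seq {set T}) : S \subset foldl (@level_step T e Bi) S l.
Proof.
elim: l S => [|Bj l IH] S /=; first exact: subxx.
exact: subset_trans (step_sub _ _ _ _) (IH _).
Qed.

Lemma foldl_conn (T : finType) (e : rel T) (Bi : {set T}) (S : {set T * T}) (l : seq {set T}) Bj x y : Bj \in l -> x \in Bj -> y \in Bi -> e x y ->
  connect (srel (foldl (@level_step T e Bi) S l)) x y.
Proof.
elim: l S => [|Bj' l IH] S /=; first by rewrite in_nil.
rewrite inE => /orP [/eqP -> | Hl] xB yB exy; last exact: IH.
apply: connect_mono (foldl_sub _ _ _ _) _.
case: (boolP (connect (srel S) x y)) => c.
  exact: connect_mono (step_sub _ _ _ _) c.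
apply: connect1; rewrite /srel /level_step inE; apply/orP; right.
by rewrite inE /= xB yB exy c.
Qed.

Lemma foldl_in (T : finType) (e : rel T) (Bi : {set T}) (S : {set T * T}) (l : seq {set T}) p : p \in foldl (@level_step T e Bi) S l ->
  p \in S \/ exists2 Bj, Bj \in l & [&& p.1 \in Bj, p.2 \in Bi & e p.1 p.2].
Proof.
elim: l S => [|Bj l IH] S /=; first by left.
move=> /IH [|[Bj' H1 H2]]; last by right; exists Bj'; rewrite // inE H1 orbT.
rewrite /level_step inE => /orP [H|]; first by left.
rewrite inE => /and4P [a b c _]; right; exists Bj; by rewrite ?inE ?eqxx ?a ?b ?c.
Qed.

Lemma aux_sub (T : finType) (e : rel T) (S : {set T * T}) (prev rest : seq {set T}) p : p \in @level_aux T e S prev rest ->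
  p \in S \/ exists i j, [/\ j < i, i < size (prev ++ rest),
    p.1 \in nth set0 (prev ++ rest) j, p.2 \in nth set0 (prev++rest) i & e p.1 p.2].
Proof.
elim: rest S prev => [|Bi rest IH] S prev /=; first by left.
move=> /IH; rewrite cat_rcons => -[|]; last by right.
move=> /foldl_in [|[Bj]]; first by left.
rewrite mem_rev inE => /orP[/eqP ->|Bjp]; first by case/and3P; rewrite in_set0.
case/and3P => p1 p2 ep; right; exists (size prev), (index Bj prev).
split.
- by rewrite index_mem.
- by rewrite size_cat /= addnS ltnS leq_addr.
- by rewrite nth_cat index_mem Bjp nth_index.
- by rewrite nth_cat ltnn subnn.
- exact ep.
Qed.

Lemma aux_mono (T : finType) (e : rel T) (S : {set T * T}) (prev rest : seq {set T}) : S \subset @level_aux T e S prev rest.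
Proof.
elim: rest S prev => [|Bi rest IH] S prev /=; first exact: subxx.
exact: subset_trans (foldl_sub _ _ _ _) (IH _ _).
Qed.

Lemma aux_conn (T : finType) (e : rel T) (S : {set T * T}) (prev rest : seq {set T}) i j x y : size prev <= i -> j < i ->
  i < size (prev ++ rest) -> x \in nth set0 (prev++rest) j ->
  y \in nth set0 (prev++rest) i -> e x y ->
  connect (srel (@level_aux T e S prev rest)) x y.
Proof.
elim: rest S prev => [|Bi rest IH] S prev /= Hi Hji.
  rewrite cats0 => H; have := leq_trans H Hi; by rewrite ltnn.
rewrite -cat_rcons => Hsz xj yi exy.
move: Hi; rewrite leq_eqVlt => /orP[/eqP eq | lt]; last first.
  by apply: IH => //; rewrite size_rcons.
apply: connect_mono (aux_mono _ _ _ _) _.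
apply: (@foldl_conn _ _ _ _ _ (nth set0 prev j)).
- by rewrite mem_rev inE (mem_nth set0) ?orbT // eq.
- by move: xj; rewrite cat_rcons nth_cat eq Hji.
- by move: yi; rewrite cat_rcons nth_cat -eq ltnn subnn.
- exact exy.
Qed.

Theorem lemma5 (T : finType) (e : rel T)
  (e_sym : symmetric e) (e_irr : irreflexive e)
  (k : nat) (hk : chromatic_number e k)
  (cmin : T -> 'I_k) (hc : proper_coloring e cmin) :
  latency_is (LevelSchedule e (color_classes cmin)) k.
Proof.
set L := color_classes cmin.
set S := LevelSchedule e L.
have sizeL : size L = k by rewrite size_map size_enum_ord.
have nthL j x : j < k -> (x \in nth set0 L j) = (cmin x == j :> nat).
  move=> Hj; rewrite (nth_map (Ordinal Hj)) ?size_enum_ord // inE -val_eqE /=.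
  by rewrite nth_enum_ord.
have edge a b : (a, b) \in S -> e a b && (cmin a < cmin b).
  move=> /aux_sub [|[i [j [ji isz ja ib eab]]]]; first by rewrite inE.
  rewrite /= sizeL in isz ja ib eab.
  rewrite nthL ?(ltn_trans ji) // in ja; rewrite nthL // in ib.
  by rewrite eab (eqP ja) (eqP ib).
have conn a b : e a b -> cmin a < cmin b -> connect (srel S) a b.
  move=> eab lt; apply: (@aux_conn _ _ _ _ _ (cmin b) (cmin a)) => //=.
  - by rewrite sizeL.
  - by rewrite nthL.
  - by rewrite nthL.
have up s : dpath S s -> size s <= k.
  case: s => [|x s] //= Hp.
  have H : path (fun a b : 'I_k => a < b) (cmin x) (map cmin s).
    by rewrite path_map; apply: sub_path Hp => a b /edge/andP[].
  have u : uniq (cmin x :: map cmin s).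
    apply: (sorted_uniq (leT := fun a b : 'I_k => a < b)) => //.
    - by move=> a b c; apply: ltn_trans.
    - by move=> a; apply: ltnn.
  have := uniq_leq_size u (s2 := enum 'I_k) (fun z _ => mem_enum _ z).
  by rewrite size_enum_ord /= size_map.
split; last exact: up.
pose P v n := if excluded_middle_informative
   (exists s, dpath S s /\ size s = n /\ last v s = v) then true else false.
have PP v n : reflect (exists s, dpath S s /\ size s = n /\ last v s = v) (P v n).
  by rewrite /P; case: excluded_middle_informative => H; constructor.
have ex v : exists n, P v n.
  by exists 0; apply/PP; exists [::].
have bnd v n : P v n -> n <= k.
  by move/PP => [s [ds [<- _]]]; exact: up ds.
pose h v := ex_maxn (ex v) (bnd v).
have hspec v : (exists s, dpath S s /\ size s = h v /\ last v s = v) /\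
    forall s, dpath S s -> last v s = v -> size s <= h v.
  rewrite /h; case: ex_maxnP => n /PP Hn Hmax; split => // s ds ls.
  by apply: Hmax; apply/PP; exists s.
have hpos v : 1 <= h v.
  by have [_ H] := hspec v; apply: (H [:: v]).
have incr u v : e u v -> cmin u < cmin v -> h u < h v.
  move=> euv lt; have /connectP [p pp vE] := conn u v euv lt.
  have [[s [ds [ss ls]]] _] := hspec u.
  have [_ mx] := hspec v.
  case: s ds ss ls => [|x s'] ds ss ls.
    by have := hpos u; rewrite -ss.
  case: p pp vE => [|y p'] pp vE.
    by rewrite /= in vE; rewrite vE e_irr in euv.
  apply: leq_trans (mx (x :: s' ++ y :: p') _ _).
  - by rewrite -ss /= size_cat /= addnS ltnS leq_addr.
  - by rewrite /= in ds ls; rewrite /= cat_path ds /= ls.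
  - by rewrite /= in ls; rewrite /= last_cat ls /= vE.
case: (posnP k) => [k0|kpos].
  by exists [::]; rewrite k0.
case: (boolP [exists v, h v == k]) => [/existsP [v /eqP hv]| /existsPn hn].
  have [[s [ds [ss _]]] _] := hspec v.
  by exists s; rewrite ss hv.
exfalso.
have hle v : h v <= k.
  by have [[s [ds [<- _]]] _] := hspec v; exact: up.
have hlt v : h v - 1 < k.-1.
  have := hpos v; have := hle v; have := hn v; lia.
apply: (hk.2 k.-1); first by rewrite prednK.
exists (fun v => Ordinal (hlt v)) => u v euv; apply/eqP => /(congr1 val) /= eqh.
have hne : h u != h v.
  have := hc u v euv; rewrite -val_eqE /= neq_ltn => /orP [lt|lt].
    by rewrite neq_ltn incr.
  by rewrite neq_ltn (incr v u) ?orbT // e_sym.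
by move: hne eqh; have := hpos u; have := hpos v; lia.
Qed.
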